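(* For every word $\omega\in[n]^*$ and every $j\in[n]$: (1) $a^j_\omega-e_j\in B_\omega$; (2) $M_\omega a^j_\omega=u_\omega+e_j\in e_j+M_\omega B_\omega$; (3) $a^j_\omega\in\delta^j_\omega+B_\omega$.
   Context: Let $[n]=\{1,\dots,n\}$, $e_1,\dots,e_n$ the standard basis of $\mathbb{Z}^n$; $\varepsilon$ is the empty word, $*$ concatenation. For words $\omega$ over $[n]$ define recursively $a^i_\omega,\delta^i_\omega\in\mathbb{Z}^n$: $a^i_\varepsilon=\delta^i_\varepsilon=e_i$; $a^i_{\omega*j}=a^i_\omega$ if $i\ne j$, $a^j_{\omega*j}=a^j_\omega+\delta^j_\omega$; $\delta^j_{\omega*j}=\delta^j_\omega$, $\delta^i_{\omega*j}=\delta^i_\omega-\delta^j_\omega$ for $i\ne j$. Let $B_\varepsilon=\{0\}$, $B_{\omega*j}=B_\omega+\{0,\delta^j_\omega\}$ (Minkowski sum). Let $M_\omega=(\delta^1_\omega\ \cdots\ \delta^n_\omega)^{-1}$ (inverse of the matrix with columns $\delta^i_\omega$). For $k\in[n]$ let $D^k=\mathrm{id}+e_k(\mathbb{1}-e_k)^T$ with $\mathbb{1}=(1,\dots,1)^T$. Define $u_\varepsilon=0$, $u_{\omega*j}=e_j+D^j u_\omega$. *)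

(* Defs.v *)
(* Vectors of Z^n are column vectors 'cV[int]_n; words over [n]
   are sequences of 'I_n (index i of [n] is the ordinal i-1); w*j is rcons w j. *)
From HB Require Import structures.
From mathcomp Require Import all_boot all_order all_algebra.
Set Implicit Arguments. Unset Strict Implicit. Unset Printing Implicit Defensive.
Import Order.TTheory GRing.Theory Num.Theory.
Local Open Scope ring_scope.

Section Defs.
Variable n : nat.

Definition ev (i : 'I_n) : 'cV[int]_n := delta_mx i 0.

Definition onev : 'cV[int]_n := const_mx 1.

Definition Dmx (k : 'I_n) : 'M[int]_n := 1%:M + ev k *m (onev - ev k)^T.

(* state after reading a word: (a, delta, B, u) *)
Definition state := (('I_n -> 'cV[int]_n) * ('I_n -> 'cV[int]_n)
                     * seq 'cV[int]_n * 'cV[int]_n)%type.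

Definition init_state : state := (ev, ev, [:: 0], 0).

Definition step (st : state) (j : 'I_n) : state :=
  let: (a, d, B, u) := st in
  ((fun i => if i == j then a j + d j else a i),
   (fun i => if i == j then d j else d i - d j),
   [seq b + c | b <- B, c <- [:: 0; d j]],
   ev j + Dmx j *m u).

Definition run (w : seq 'I_n) : state := foldl step init_state w.

Definition avec (w : seq 'I_n) (i : 'I_n) : 'cV[int]_n := (run w).1.1.1 i.
Definition dvec (w : seq 'I_n) (i : 'I_n) : 'cV[int]_n := (run w).1.1.2 i.
Definition Bset (w : seq 'I_n) : seq 'cV[int]_n := (run w).1.2.
Definition uvec (w : seq 'I_n) : 'cV[int]_n := (run w).2.

Definition Delta (w : seq 'I_n) : 'M[int]_n := \matrix_(r, c) dvec w c r 0.
Definition Mmx (w : seq 'I_n) : 'M[int]_n := invmx (Delta w).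

End Defs.

(* Main.v *)
Require Import Defs.
From HB Require Import structures.
From mathcomp Require Import all_boot all_order all_algebra.
Import Order.TTheory GRing.Theory Num.Theory.
Local Open Scope ring_scope.

Section S.
Variable n : nat.
Implicit Types (w : seq 'I_n) (j k : 'I_n).

Lemma run_rcons w k : run (rcons w k) = step (run w) k.
Proof. by rewrite /run foldl_rcons. Qed.

Lemma avec_rcons w k i : avec (rcons w k) i =
  if i == k then avec w k + dvec w k else avec w i.
Proof. by rewrite /avec /dvec run_rcons; case: (run w) => [[[a d] B] u]. Qed.

Lemma dvec_rcons w k i : dvec (rcons w k) i =
  if i == k then dvec w k else dvec w i - dvec w k.
Proof. by rewrite /dvec run_rcons; case: (run w) => [[[a d] B] u]. Qed.

Lemma Bset_rcons w k : Bset (rcons w k) =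
  [seq b + c | b <- Bset w, c <- [:: 0; dvec w k]].
Proof. by rewrite /Bset /dvec run_rcons; case: (run w) => [[[a d] B] u]. Qed.

Lemma uvec_rcons w k : uvec (rcons w k) = ev k + Dmx k *m uvec w.
Proof. by rewrite /uvec run_rcons; case: (run w) => [[[a d] B] u]. Qed.

Lemma memB0 w k b : b \in Bset w -> b \in Bset (rcons w k).
Proof.
move=> hb; rewrite Bset_rcons -[b]addr0.
by apply: (allpairs_f (fun x y => x + y)) => //; rewrite inE eqxx.
Qed.

Lemma memBd w k b : b \in Bset w -> dvec w k + b \in Bset (rcons w k).
Proof.
move=> hb; rewrite Bset_rcons addrC.
by apply: (allpairs_f (fun x y => x + y)) => //; rewrite !inE eqxx orbT.
Qed.

Definition Nmx k : 'M[int]_n := ev k *m (onev n - ev k)^T.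

Lemma NN k : Nmx k *m Nmx k = 0.
Proof.
rewrite /Nmx -mulmxA [(_ ^T *m _)]mulmxA.
have -> : (onev n - ev k)^T *m ev k = 0.
  apply/matrixP => r c; rewrite !mxE big1 // => i _.
  rewrite !mxE !ord1 !eqxx !andbT; case: (i == k) => /=; by rewrite ?subrr ?mul0r ?mulr0.
by rewrite mul0mx mulmx0.
Qed.

Lemma Delta_rcons w k : Delta (rcons w k) = Delta w *m (1%:M - Nmx k).
Proof.
apply/matrixP => r c.
rewrite mulmxBr mulmx1 /Nmx mulmxA -colE !mxE dvec_rcons.
rewrite big_ord1 !mxE.
case: (eqVneq c k) => [->|ck] /=; first by rewrite subrr mulr0 subr0.
by rewrite !mxE subr0 mulr1.
Qed.

Lemma Delta_nil : Delta (Nil (ordinal n)) = 1%:M.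
Proof.
apply/matrixP => r c; rewrite !mxE /dvec /=. by rewrite (_ : forall x y : 'I_1, (x == y) = true) ?andbT // => x y; rewrite !ord1.
Qed.

Lemma Delta_unit w : Delta w \in unitmx.
Proof.
elim/last_ind: w => [|w k IH]; first by rewrite Delta_nil unitmx1.
rewrite Delta_rcons unitmx_mul IH /=.
have h : (1%:M - Nmx k) *m (1%:M + Nmx k) = 1%:M.
  by rewrite mulmxBl mul1mx mulmxDr mulmx1 NN addr0 addrK.
by case: (mulmx1_unit h).
Qed.

Lemma Delta_ev w k : Delta w *m ev k = dvec w k.
Proof. by rewrite /ev -colE; apply/matrixP => r c; rewrite !mxE ord1. Qed.

Lemma key w j : avec w j = dvec w j + Delta w *m uvec w.
Proof.
elim/last_ind: w j => [|w k IH] j.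
  by rewrite /avec /dvec /uvec /= mulmx0 addr0.
have hD : Delta (rcons w k) *m uvec (rcons w k) = dvec w k + Delta w *m uvec w.
  rewrite uvec_rcons mulmxDr Delta_ev dvec_rcons eqxx; congr (_ + _).
  rewrite Delta_rcons mulmxA -[_ *m _ *m Dmx k]mulmxA /Dmx -/(Nmx k).
  have -> : (1%:M - Nmx k) *m (1%:M + Nmx k) = 1%:M.
    by rewrite mulmxBl mul1mx mulmxDr mulmx1 NN addr0 addrK.
  by rewrite mulmx1.
rewrite hD avec_rcons dvec_rcons; case: ifP => [/eqP ejk|_]; first subst j.
  by rewrite IH [RHS]addrA addrAC.
by rewrite IH addrA subrK.
Qed.

Lemma part1 w j : avec w j - ev j \in Bset w.
Proof.
elim/last_ind: w j => [|w k IH] j.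
  by rewrite /avec /Bset /= subrr inE.
rewrite avec_rcons; case: ifP => [/eqP ->|_]; last exact: memB0.
by rewrite addrAC addrC; apply: memBd.
Qed.

Lemma part3 w j : exists2 b, b \in Bset w & avec w j = dvec w j + b.
Proof.
elim/last_ind: w j => [|w k IH] j.
  by exists 0; rewrite /avec /dvec /Bset /= ?inE ?addr0.
rewrite avec_rcons dvec_rcons; case: ifP => [/eqP ejk|_]; first subst j.
  have [b hb e] := IH k.
  by exists (avec w k); [rewrite e; apply: memBd | rewrite addrC].
have [b hb e] := IH j.
exists (dvec w k + b); first exact: memBd.
by rewrite e addrA subrK.
Qed.

End S.

Theorem mainTheorem8 (n : nat) (w : seq 'I_n) (j : 'I_n) :
  [/\ avec w j - ev j \in Bset w,
      Mmx w *m avec w j = uvec w + ev j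
      /\ (exists2 b, b \in Bset w & uvec w + ev j = ev j + Mmx w *m b)
    & exists2 b, b \in Bset w & avec w j = dvec w j + b].
Proof.
have hM : Mmx w *m avec w j = uvec w + ev j.
  by rewrite key -Delta_ev -mulmxDr /Mmx mulKmx ?Delta_unit // addrC.
split; [exact: part1 | split => // | exact: part3].
have [b hb e] := @part3 n w j.
exists b => //.
have : Mmx w *m avec w j = ev j + Mmx w *m b.
  by rewrite e -Delta_ev mulmxDr /Mmx mulKmx ?Delta_unit.
by rewrite hM addrC.
Qed.
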